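(* Let $k_1,k_2,m$ be nonnegative integers with $k_1\le k_2$ and $k_1+k_2-m\le\dim V$. Let $Y_1\in\mathcal H_{k_1-m}$ and $X_2\in\mathcal H_{k_2}$ be subspaces whose intersection is a single point. Then the following are equivalent: (i) $Y_1\perp^{*}X_2$ (equivalently, $Y_1\perp_x X_2$); (ii) $X_1\perp^{*}X_2$ for every $X_1\in\mathcal H_{k_1}$ such that $Y_1\subset X_1$ and $\dim(X_1\cap X_2)=m$.
   Context: Let $V$ be a vector space over a field with a nondegenerate symmetric bilinear form $\xi$ having no isotropic vectors. Points are elements of $V$; (affine) subspaces are sets $p+W$ with $W$ a linear subspace, of dimension $\dim W$. $\mathcal H_k$ denotes the family of $k$-dimensional subspaces. $X_1\sqcup X_2$ denotes the least subspace containing $X_1\cup X_2$. For nonempty subspaces $X,Y$: $X\perp Y$ iff $\xi(b-a,d-c)=0$ for all $a,b\in X$, $c,d\in Y$; $X\perp_x Y$ iff $X\perp Y$ and $X\cap Y\neq\emptyset$. $X_1\perp^{\circ}X_2$ iff there are a point $q\in X_1\cap X_2$ and subspaces $Z_1,Z_2$ with $q\in Z_1,Z_2$, $Z_i\perp_x X_1\cap X_2$, $Z_1\perp_x Z_2$, and $(X_1\cap X_2)\sqcup Z_i=X_i$ for $i=1,2$. $X_1\perp^{*}X_2$ iff $X_1\perp^{\circ}X_2$ and $X_1\cap X_2$ is different from both $X_1$ and $X_2$. *)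

(* Defs.v *)
From HB Require Import structures.
From mathcomp Require Import all_boot all_order all_algebra.
From mathcomp Require Export classical_sets.
Set Implicit Arguments. Unset Strict Implicit. Unset Printing Implicit Defensive.
Import GRing.Theory.
Local Open Scope ring_scope.
Local Open Scope classical_set_scope.

Section Defs.
Variables (F : fieldType) (V : lmodType F).

Definition lspan (s : seq V) : set V :=
  [set v | exists c : 'I_(size s) -> F, v = \sum_(i < size s) c i *: s`_i].

Definition lfree (s : seq V) : Prop :=
  forall c : 'I_(size s) -> F,
    \sum_(i < size s) c i *: s`_i = 0 -> forall i, c i = 0.

Definition lsubspace (W : set V) : Prop :=
  W 0 /\ (forall u v, W u -> W v -> W (u + v)) /\
  (forall a v, W v -> W (a *: v)).

Definition asubspace (X : set V) : Prop :=
  exists p W, lsubspace W /\ X = [set p + w | w in W].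

Definition Hk (k : nat) (X : set V) : Prop :=
  exists p (s : seq V), size s = k /\ lfree s /\ X = [set p + w | w in lspan s].

Definition dim_ge (n : nat) : Prop := exists s : seq V, size s = n /\ lfree s.

Definition ajoin (X1 X2 : set V) : set V :=
  [set v | forall Y, asubspace Y -> X1 `|` X2 `<=` Y -> Y v].

Variable xi : V -> V -> F.

Definition perp (X Y : set V) : Prop :=
  forall a b c d, X a -> X b -> Y c -> Y d -> xi (b - a) (d - c) = 0.

Definition perp_x (X Y : set V) : Prop := perp X Y /\ X `&` Y !=set0.

Definition perp_o (X1 X2 : set V) : Prop :=
  exists q, (X1 `&` X2) q /\
  exists Z1 Z2, [/\ asubspace Z1, asubspace Z2, Z1 q & Z2 q] /\
    [/\ perp_x Z1 (X1 `&` X2), perp_x Z2 (X1 `&` X2), perp_x Z1 Z2,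
        ajoin (X1 `&` X2) Z1 = X1 & ajoin (X1 `&` X2) Z2 = X2].

Definition perp_star (X1 X2 : set V) : Prop :=
  [/\ perp_o X1 X2, X1 `&` X2 <> X1 & X1 `&` X2 <> X2].

End Defs.

(* Main.v *)
Require Import Defs.
From HB Require Import structures.
From mathcomp Require Import all_boot all_order all_algebra.
From mathcomp Require Import classical_sets.
From mathcomp Require Import zify.
Import GRing.Theory.
Local Open Scope ring_scope.
Local Open Scope classical_set_scope.
Set Implicit Arguments. Unset Strict Implicit.

Section Mx.
Variables (F : fieldType).

Lemma ker0_rank n n' (A : 'M[F]_(n, n')) :
  (forall c : 'rV_n, c *m A = 0 -> c = 0) -> \rank A = n.
Proof.
move=> H.
have k0 : kermx A = 0.
  apply/row_matrixP => i; rewrite row0; apply: H.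
  by rewrite -row_mul mulmx_ker row0.
have := mxrank_ker A; rewrite k0 mxrank0 => /esym/eqP; rewrite subn_eq0 => h.
by apply/eqP; rewrite eqn_leq rank_leq_row h.
Qed.

Lemma rankfull_solve n n' (A : 'M[F]_(n, n')) :
  \rank A = n' -> forall b : 'rV_n', exists c : 'rV_n, c *m A = b.
Proof.
move=> h b.
have : row_full A by rewrite /row_full h.
move=> /row_fullP [B hB]; exists (b *m B); by rewrite -mulmxA hB mulmx1.
Qed.
End Mx.

Section Lin.
Variables (F : fieldType) (V : lmodType F).

Definition sp (s : seq V) : set V :=
  [set v | exists c : nat -> F, v = \sum_(i < size s) c i *: s`_i].
Definition fr (s : seq V) : Prop :=
  forall c : nat -> F, \sum_(i < size s) c i *: s`_i = 0 ->
    forall i, (i < size s)%N -> c i = 0.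

Definition ext (n : nat) (c : 'I_n -> F) (k : nat) : F := odflt 0 (omap c (insub k)).
Lemma extE n c (i : 'I_n) : ext c i = c i.
Proof. by rewrite /ext valK. Qed.

Lemma lspanE s : lspan s = sp s.
Proof.
apply: boolp.funext => v; apply: boolp.propext; split.
- move=> [c ->]; exists (ext c); apply: eq_bigr => i _; by rewrite extE.
- move=> [c ->]; by exists (fun i => c (val i)).
Qed.

Lemma lfreeE s : lfree s <-> fr s.
Proof.
split.
- move=> H c Hc i hi; exact: (H (fun j => c (val j)) Hc (Ordinal hi)).
- move=> H c Hc i; rewrite -extE; apply: H (ltn_ord i).
  rewrite -[RHS]Hc; apply: eq_bigr => j _; by rewrite extE.
Qed.

Lemma sp0 s : sp s 0.
Proof. exists (fun=> 0); rewrite big1 // => i _; by rewrite scale0r. Qed.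

Lemma spD s u v : sp s u -> sp s v -> sp s (u + v).
Proof.
move=> [c ->] [d ->]; exists (fun i => c i + d i).
rewrite -big_split; apply: eq_bigr => i _; by rewrite scalerDl.
Qed.

Lemma spZ s a v : sp s v -> sp s (a *: v).
Proof.
move=> [c ->]; exists (fun i => a * c i).
rewrite scaler_sumr; apply: eq_bigr => i _; by rewrite scalerA.
Qed.

Lemma spN s v : sp s v -> sp s (- v).
Proof. move=> h; rewrite -scaleN1r; exact: spZ. Qed.

Lemma spB s u v : sp s u -> sp s v -> sp s (u - v).
Proof. move=> hu hv; apply: spD => //; exact: spN. Qed.

Lemma sp_nth s i : (i < size s)%N -> sp s s`_i.
Proof.
move=> hi; exists (fun j => (j == i)%:R).
rewrite (bigD1 (Ordinal hi)) //= eqxx scale1r big1 ?addr0 // => j hj.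
have -> : (val j == i) = false.
  apply/negbTE; apply: contra hj => /eqP e; apply/eqP; exact: val_inj.
by rewrite scale0r.
Qed.

Lemma sp_lsub s : lsubspace (sp s).
Proof. split; first exact: sp0. split; [exact: spD | exact: spZ]. Qed.

Lemma sp_nil v : sp [::] v -> v = 0.
Proof. by move=> [c ->]; rewrite big_ord0. Qed.

Lemma sp_cat a b v : sp (a ++ b) v <-> exists u w, sp a u /\ sp b w /\ v = u + w.
Proof.
split.
- move=> [c ->].
  have -> : \sum_(i < size (a ++ b)) c i *: (a ++ b)`_i =
            \sum_(i < size a + size b) c i *: (a ++ b)`_i.
    by rewrite size_cat.
  rewrite big_split_ord /=.
  exists (\sum_(i < size a) c i *: a`_i), (\sum_(i < size b) c (size a + i)%N *: b`_i).
  split; first by exists c.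
  split; first by exists (fun i => c (size a + i)%N).
  congr (_ + _); apply: eq_bigr => i _; rewrite nth_cat.
    by rewrite ltn_ord.
  by rewrite ltnNge leq_addr /= addKn.
- move=> [u [w [[c ->] [[d ->] ->]]]].
  exists (fun i => if (i < size a)%N then c i else d (i - size a)%N).
  have -> : \sum_(i < size (a ++ b))
     (if (i < size a)%N then c i else d (i - size a)%N) *: (a ++ b)`_i =
     \sum_(i < size a + size b)
     (if (i < size a)%N then c i else d (i - size a)%N) *: (a ++ b)`_i.
    by rewrite size_cat.
  rewrite big_split_ord /=.
  congr (_ + _); apply: eq_bigr => i _; rewrite nth_cat.
    by rewrite ltn_ord.
  by rewrite ltnNge leq_addr /= addKn.
Qed.

Lemma fr_coord s (c d : nat -> F) : fr s ->
  \sum_(i < size s) c i *: s`_i = \sum_(i < size s) d i *: s`_i ->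
  forall i, (i < size s)%N -> c i = d i.
Proof.
move=> H e i hi; apply/eqP; rewrite -subr_eq0; apply/eqP.
apply: (H (fun j => c j - d j)) hi.
rewrite (eq_bigr (fun j : 'I_(size s) => c j *: s`_j - d j *: s`_j)); last by move=> j _; rewrite scalerBl.
by rewrite sumrB e subrr.
Qed.

Lemma fr_nth s i : fr s -> (i < size s)%N -> s`_i != 0.
Proof.
move=> H hi; apply/eqP => e.
suff : ((i == i)%:R : F) = 0 by rewrite eqxx => /eqP; rewrite oner_eq0.
apply: (H (fun j => (j == i)%:R)) (hi).
rewrite (bigD1 (Ordinal hi)) //= eqxx scale1r e add0r big1 // => j hj.
have -> : (val j == i) = false.
  apply/negbTE; apply: contra hj => /eqP e'; apply/eqP; exact: val_inj.
by rewrite scale0r.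
Qed.

Lemma fr_cat a b : fr a -> fr b -> (forall v, sp a v -> sp b v -> v = 0) -> fr (a ++ b).
Proof.
move=> Ha Hb Hab c.
have -> : \sum_(i < size (a ++ b)) c i *: (a ++ b)`_i =
          \sum_(i < size a + size b) c i *: (a ++ b)`_i.
  by rewrite size_cat.
rewrite big_split_ord /=.
set u := \sum_(i < size a) _; set w := \sum_(i < size b) _.
have eu : u = \sum_(i < size a) c i *: a`_i.
  by apply: eq_bigr => i _; rewrite nth_cat ltn_ord.
have ew : w = \sum_(i < size b) c (size a + i)%N *: b`_i.
  by apply: eq_bigr => i _; rewrite nth_cat ltnNge leq_addr /= addKn.
move=> e.
have u0 : u = 0.
  apply: Hab; first by rewrite eu; exists c.
  have -> : u = - w by apply/eqP; rewrite -subr_eq0 opprK e.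
  apply: spN; rewrite ew; by exists (fun i => c (size a + i)%N).
have w0 : w = 0 by move: e; rewrite u0 add0r.
move=> i; rewrite size_cat => hi.
case: (ltnP i (size a)) => hia.
  apply: (Ha c) => //; by rewrite -eu.
have := Hb (fun j => c (size a + j)%N) _ (i - size a)%N.
rewrite subnKC //; apply; first by rewrite -ew.
by rewrite ltn_subLR.
Qed.

Lemma sp_mx s u : (forall j, (j < size u)%N -> sp s u`_j) ->
  exists A : 'M[F]_(size u, size s),
    forall j : 'I_(size u), u`_j = \sum_(i < size s) A j i *: s`_i.
Proof.
move=> H.
have [f hf] : exists f : 'I_(size u) -> nat -> F,
    forall j : 'I_(size u), u`_j = \sum_(i < size s) f j i *: s`_i.
  have H' : forall j : 'I_(size u), exists c : nat -> F,
      u`_j = \sum_(i < size s) c i *: s`_i.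
    move=> j; have [c hc] := H _ (ltn_ord j); by exists c.
  have [f hf] := boolp.choice H'.
  by exists f.
exists (\matrix_(j < size u, i < size s) f j i) => j; rewrite hf; apply: eq_bigr => i _; by rewrite mxE.
Qed.

Lemma mx_comb (s u : seq V) (A : 'M[F]_(size u, size s)) (c : 'rV_(size u)) :
  (forall j : 'I_(size u), u`_j = \sum_(i < size s) A j i *: s`_i) ->
  \sum_(j < size u) c 0 j *: u`_j = \sum_(i < size s) (c *m A) 0 i *: s`_i.
Proof.
move=> hA.
under eq_bigr => j _ do rewrite hA scaler_sumr.
rewrite exchange_big /=; apply: eq_bigr => i _.
rewrite mxE scaler_suml; apply: eq_bigr => j _; by rewrite scalerA.
Qed.

Lemma KL s u : fr u -> (forall j, (j < size u)%N -> sp s u`_j) ->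
  (size u <= size s)%N /\ (size u = size s -> forall v, sp s v -> sp u v).
Proof.
move=> Hu Hs; have [A hA] := sp_mx Hs.
have rk : \rank A = size u.
  apply: ker0_rank => c hc; apply/rowP => j; rewrite mxE.
  rewrite -extE; apply: (Hu (ext (c 0))) (ltn_ord j).
  rewrite (eq_bigr (fun j : 'I_(size u) => c 0 j *: u`_j)); last by move=> k _; rewrite extE.
  rewrite (mx_comb c hA) hc big1 // => i _; by rewrite mxE scale0r.
split; first by rewrite -rk rank_leq_col.
move=> e v [b ->].
have [c hc] := rankfull_solve (A := A) (etrans rk e) (\row_i b i).
exists (ext (c 0)).
rewrite (eq_bigr (fun j : 'I_(size u) => c 0 j *: u`_j)); last by move=> k _; rewrite extE.
rewrite (mx_comb c hA) hc; apply: eq_bigr => i _; by rewrite mxE.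
Qed.
Lemma bump_lt i j m k : (m + (i < k) <= k)%N -> (j < m)%N -> (bump i j < k)%N.
Proof.
move=> h hj; rewrite /bump; case: (leqP i j) => hij; case: (ltnP i k) h => hik /= h; lia.
Qed.

Lemma sel (s : seq V) m i : fr s -> (m + (i < size s) <= size s)%N ->
  let t := mkseq (fun j => s`_(bump i j)) m in
  [/\ size t = m, fr t,
      (forall v, sp t v -> exists e : nat -> F,
          v = \sum_(l < size s) e l *: s`_l /\ e i = 0)
    & (forall v, sp t v -> sp s v)].
Proof.
move=> Hs hm t.
have st : size t = m by rewrite size_mkseq.
have ht : forall c : nat -> F, \sum_(j < size t) c j *: t`_j =
    \sum_(j < m) c j *: s`_(bump i j).
  move=> c; rewrite st; apply: eq_bigr => j _; by rewrite /t nth_mkseq.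
have key : forall c : nat -> F, \sum_(j < m) c j *: s`_(bump i j) =
    \sum_(l < size s) (\sum_(j < m | bump i j == l) c j) *: s`_l.
  move=> c.
  under [RHS]eq_bigr => l _ do rewrite scaler_suml big_mkcond /=.
  rewrite exchange_big /=; apply: eq_bigr => j _.
  have hj := bump_lt hm (ltn_ord j).
  rewrite (bigD1 (Ordinal hj)) //= eqxx big1 ?addr0 // => l hl.
  case: ifP => // /eqP e; case/negP: hl; apply/eqP; exact: val_inj.
have ei : forall c : nat -> F, \sum_(j < m | bump i j == i) c j = 0.
  move=> c; rewrite big1 // => j /eqP e.
  by have := neq_bump i j; rewrite e eqxx.
have ej : forall (c : nat -> F) (j0 : 'I_m),
    \sum_(j < m | bump i j == bump i j0) c j = c j0.
  move=> c j0; rewrite (bigD1 j0) //= big1 ?addr0 // => j /andP [/eqP e hne].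
  case/negP: hne; apply/eqP; apply: val_inj => /=.
  by rewrite -(bumpK i j) e bumpK.
have rep : forall v, sp t v -> exists e : nat -> F,
          v = \sum_(l < size s) e l *: s`_l /\ e i = 0.
  move=> v [c ->]; exists (fun l => \sum_(j < m | bump i j == l) c j).
  by rewrite ht key; split => //; apply: ei.
split => //.
- move=> c hc j hj; rewrite st in hj.
  have := Hs (fun l => \sum_(j < m | bump i j == l) c j) (etrans (esym (etrans (ht c) (key c))) hc) (bump i j) (bump_lt hm hj).
  by rewrite (ej c (Ordinal hj)).
- move=> v /rep [e [-> _]]; by exists e.
Qed.

End Lin.

Section Aff.
Variables (F : fieldType) (V : lmodType F).
Implicit Types (L W A B Z Y : set V) (p q u v w : V).

Definition tr (p : V) (L : set V) : set V := [set p + w | w in L].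
Definition ssum (L1 L2 : set V) : set V :=
  [set v | exists u w, L1 u /\ L2 w /\ v = u + w].

Lemma tr_mem p L v : tr p L v <-> L (v - p).
Proof.
split.
- by move=> [w hw <-]; rewrite (addrC p) addrK.
- move=> h; exists (v - p) => //; by rewrite addrC subrK.
Qed.

Lemma tr_memD p L w : tr p L (p + w) <-> L w.
Proof. by rewrite tr_mem (addrC p) addrK. Qed.

Lemma lsub0 L : lsubspace L -> L 0.
Proof. by case. Qed.
Lemma lsubD L u v : lsubspace L -> L u -> L v -> L (u + v).
Proof. by case=> _ [h _]; apply: h. Qed.
Lemma lsubZ L a v : lsubspace L -> L v -> L (a *: v).
Proof. by case=> _ [_ h]; apply: h. Qed.
Lemma lsubN L v : lsubspace L -> L v -> L (- v).
Proof. move=> hL hv; rewrite -scaleN1r; exact: lsubZ. Qed.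
Lemma lsubB L u v : lsubspace L -> L u -> L v -> L (u - v).
Proof. move=> hL hu hv; apply: lsubD => //; exact: lsubN. Qed.

Lemma seteqE (A B : set V) : (forall v, A v <-> B v) -> A = B.
Proof. move=> h; apply: boolp.funext => v; apply: boolp.propext; exact: h. Qed.

Lemma rebase p q L : lsubspace L -> tr p L q -> tr p L = tr q L.
Proof.
move=> hL /tr_mem hq; apply: seteqE => v; rewrite !tr_mem; split => h.
- have -> : v - q = (v - p) - (q - p) by rewrite opprB addrA subrK.
  exact: lsubB.
- have -> : v - p = (v - q) + (q - p) by rewrite addrA subrK.
  exact: lsubD.
Qed.

Lemma tr_pt p L : lsubspace L -> tr p L p.
Proof. move=> hL; apply/tr_mem; rewrite subrr; exact: lsub0. Qed.

Lemma asub_tr p L : lsubspace L -> asubspace (tr p L).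
Proof. by move=> hL; exists p, L. Qed.

Lemma asub_pt Z q : asubspace Z -> Z q -> exists W, lsubspace W /\ Z = tr q W.
Proof.
move=> [p [W [hW ->]]] hq; exists W; split => //; exact: rebase.
Qed.

Lemma tr_cap p (L1 L2 : set V) : tr p L1 `&` tr p L2 = tr p (L1 `&` L2).
Proof.
apply: seteqE => v; split.
- by move=> [/tr_mem h1 /tr_mem h2]; apply/tr_mem.
- by move=> /tr_mem [h1 h2]; split; apply/tr_mem.
Qed.

Lemma tr_sub p (L1 L2 : set V) : tr p L1 `<=` tr p L2 -> L1 `<=` L2.
Proof. by move=> h w /(tr_memD p) /h /tr_memD. Qed.

Lemma tr_eq p (L1 L2 : set V) : tr p L1 = tr p L2 -> L1 = L2.
Proof.
move=> e; apply: seteqE => v; split; apply: (tr_sub (p := p)); rewrite e => //.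
Qed.

Lemma ssum_lsub (L1 L2 : set V) : lsubspace L1 -> lsubspace L2 -> lsubspace (ssum L1 L2).
Proof.
move=> h1 h2; split; first by exists 0, 0; rewrite addr0; split; [exact: lsub0|split; [exact: lsub0|]].
split.
- move=> _ _ [u1 [w1 [hu1 [hw1 ->]]]] [u2 [w2 [hu2 [hw2 ->]]]].
  exists (u1 + u2), (w1 + w2); split; first exact: lsubD.
  split; first exact: lsubD. by rewrite addrACA.
- move=> a _ [u [w [hu [hw ->]]]]; exists (a *: u), (a *: w).
  split; first exact: lsubZ. split; first exact: lsubZ. by rewrite scalerDr.
Qed.

Lemma ssum_l (L1 L2 : set V) u : lsubspace L2 -> L1 u -> ssum L1 L2 u.
Proof. move=> h2 hu; exists u, 0; rewrite addr0; split => //; split => //; exact: lsub0. Qed.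
Lemma ssum_r (L1 L2 : set V) u : lsubspace L1 -> L2 u -> ssum L1 L2 u.
Proof. move=> h1 hu; exists 0, u; rewrite add0r; split => //; exact: lsub0. Qed.

Lemma ajoin_le A B Z : asubspace Z -> A `<=` Z -> B `<=` Z -> ajoin A B `<=` Z.
Proof. move=> hZ hA hB v hv; apply: hv => // x [/hA|/hB] //. Qed.

Lemma ajoin_geA A B : A `<=` ajoin A B.
Proof. move=> v hv Y _ h; apply: h; by left. Qed.
Lemma ajoin_geB A B : B `<=` ajoin A B.
Proof. move=> v hv Y _ h; apply: h; by right. Qed.

Lemma ajoin_tr q (L1 L2 : set V) : lsubspace L1 -> lsubspace L2 ->
  ajoin (tr q L1) (tr q L2) = tr q (ssum L1 L2).
Proof.
move=> h1 h2; apply/seteqP; split.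
- apply: ajoin_le; first by apply: asub_tr; exact: ssum_lsub.
  + move=> v /tr_mem h; apply/tr_mem; exact: ssum_l.
  + move=> v /tr_mem h; apply/tr_mem; exact: ssum_r.
- move=> v /tr_mem [u [w [hu [hw e]]]] Y hY hsub.
  have hq : Y q by apply: hsub; left; exact: tr_pt.
  have [W [hW eY]] := asub_pt hY hq.
  rewrite eY in hsub *.
  have hu' : W u by apply: (tr_sub (L1 := L1)) => // x hx; apply: hsub; left.
  have hw' : W w by apply: (tr_sub (L1 := L2)) => // x hx; apply: hsub; right.
  apply/tr_mem; rewrite e; exact: lsubD.
Qed.

Lemma ajoin_pt p Z : asubspace Z -> Z p -> ajoin [set p] Z = Z.
Proof.
move=> hZ hp; apply/seteqP; split.
- apply: ajoin_le => // x ->; exact: hp.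
- exact: ajoin_geB.
Qed.

Lemma HkE k X : Hk k X <-> exists p (s : seq V), [/\ size s = k, fr s & X = tr p (sp s)].
Proof.
split.
- move=> [p [s [hs [hf hX]]]]; exists p, s; split => //; first exact/lfreeE.
  by rewrite hX lspanE.
- move=> [p [s [hs hf hX]]]; exists p, s; split => //; split; first exact/lfreeE.
  by rewrite hX lspanE.
Qed.

Lemma lsubI (L1 L2 : set V) : lsubspace L1 -> lsubspace L2 -> lsubspace (L1 `&` L2).
Proof.
move=> h1 h2; split; first by split; exact: lsub0.
split.
- move=> u v [? ?] [? ?]; split; exact: lsubD.
- move=> a v [? ?]; split; exact: lsubZ.
Qed.

End Aff.

Section Xi.
Variables (F : fieldType) (V : lmodType F) (xi : V -> V -> F).
Hypothesis xi_sym : forall u v, xi u v = xi v u.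
Hypothesis xi_linl : forall (a : F) (u v w : V), xi (a *: u + v) w = a * xi u w + xi v w.
Hypothesis xi_aniso : forall u, xi u u = 0 -> u = 0.

Lemma xiDl u v w : xi (u + v) w = xi u w + xi v w.
Proof. by rewrite -{1}[u]scale1r xi_linl mul1r. Qed.

Lemma xi0l w : xi 0 w = 0.
Proof.
have e : xi 0 w = xi 0 w + xi 0 w by rewrite -xiDl addr0.
apply: (addrI (xi 0 w)); by rewrite addr0 -e.
Qed.

Lemma xiZl a u w : xi (a *: u) w = a * xi u w.
Proof. by rewrite -[a *: u]addr0 xi_linl xi0l addr0. Qed.

Lemma xiNl u w : xi (- u) w = - xi u w.
Proof. by rewrite -scaleN1r xiZl mulN1r. Qed.

Lemma xiBl u v w : xi (u - v) w = xi u w - xi v w.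
Proof. by rewrite xiDl xiNl. Qed.

Lemma xi0r w : xi w 0 = 0.
Proof. by rewrite xi_sym xi0l. Qed.
Lemma xiDr u v w : xi w (u + v) = xi w u + xi w v.
Proof. by rewrite !(xi_sym w) xiDl. Qed.
Lemma xiZr a u w : xi w (a *: u) = a * xi w u.
Proof. by rewrite !(xi_sym w) xiZl. Qed.
Lemma xiBr u v w : xi w (u - v) = xi w u - xi w v.
Proof. by rewrite !(xi_sym w) xiBl. Qed.

Lemma xi_suml n (c : nat -> F) (f : nat -> V) w :
  xi (\sum_(i < n) c i *: f i) w = \sum_(i < n) c i * xi (f i) w.
Proof.
rewrite (big_morph (fun x => xi x w) (id1 := 0) (op1 := +%R) (fun x y => xiDl x y w) (xi0l w)).
by apply: eq_bigr => i _; rewrite xiZl.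
Qed.

Lemma xi_sumr n (c : nat -> F) (f : nat -> V) w :
  xi w (\sum_(i < n) c i *: f i) = \sum_(i < n) c i * xi w (f i).
Proof.
rewrite xi_sym xi_suml; apply: eq_bigr => i _; by rewrite xi_sym.
Qed.

Lemma gram t : fr t -> forall w, exists mu, sp t mu /\
  forall tau, sp t tau -> xi (w - mu) tau = 0.
Proof.
move=> Ht w.
pose G := \matrix_(i < size t, j < size t) xi t`_i t`_j.
have hG : forall (c : 'rV_(size t)) (j : 'I_(size t)),
    xi (\sum_(i < size t) ext (c 0) i *: t`_i) t`_j = (c *m G) 0 j.
  move=> c j; rewrite xi_suml !mxE; apply: eq_bigr => i _; by rewrite extE mxE.
have rk : \rank G = size t.
  apply: ker0_rank => c hc.
  set v := \sum_(i < size t) ext (c 0) i *: t`_i.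
  have v0 : v = 0.
    apply: xi_aniso; rewrite {2}/v xi_sumr big1 // => j _.
    case: (ltnP j (size t)) => hj.
      by rewrite (hG c (Ordinal hj)) hc mxE mulr0.
    by rewrite nth_default // xi0r mulr0.
  apply/rowP => j; rewrite mxE -extE; exact: (Ht _ v0 _ (ltn_ord j)).
have [c hc] := rankfull_solve rk (\row_j xi w t`_j).
exists (\sum_(i < size t) ext (c 0) i *: t`_i); split; first by exists (ext (c 0)).
move=> tau [d ->]; rewrite xi_sumr big1 // => j _.
rewrite xiBl (hG c j) hc mxE subrr; by rewrite mulr0.
Qed.


Lemma perp_tr p q L1 L2 : lsubspace L1 -> lsubspace L2 ->
  perp xi (tr p L1) (tr q L2) <-> (forall u w, L1 u -> L2 w -> xi u w = 0).
Proof.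
move=> h1 h2; split.
- move=> H u w hu hw.
  have := H p (p + u) q (q + w) (tr_pt p h1) (proj2 (tr_memD _ _ _) hu)
    (tr_pt q h2) (proj2 (tr_memD _ _ _) hw).
  by rewrite !(addrC p) !(addrC q) !addrK.
- move=> H a b c d /tr_mem ha /tr_mem hb /tr_mem hc /tr_mem hd.
  have -> : b - a = (b - p) - (a - p) by rewrite opprB addrA subrK.
  have -> : d - c = (d - q) - (c - q) by rewrite opprB addrA subrK.
  apply: H; exact: lsubB.
Qed.

Lemma perp_pt p L : perp xi L [set p].
Proof. move=> a b c d _ _ -> ->; by rewrite subrr xi0r. Qed.
Lemma perp_ptl p L : perp xi [set p] L.
Proof. move=> a b c d -> -> _ _; by rewrite subrr xi0l. Qed.

Lemma YW0_of p (y s2 : seq V) : tr p (sp y) `&` tr p (sp s2) = [set p] ->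
  forall v, sp y v -> sp s2 v -> v = 0.
Proof.
move=> hp v hy hs.
have : [set p] (p + v) by rewrite -hp; split; apply/tr_memD.
move=> /= e; apply: (addrI p); by rewrite addr0.
Qed.

Lemma dir1 p (y s2 : seq V) k1 k2 m : fr y -> fr s2 -> size y = (k1 - m)%N ->
  size s2 = k2 -> (m <= k1)%N -> (k1 <= k2)%N ->
  tr p (sp y) `&` tr p (sp s2) = [set p] ->
  perp_star xi (tr p (sp y)) (tr p (sp s2)) ->
  forall X1, Hk k1 X1 -> tr p (sp y) `<=` X1 -> Hk m (X1 `&` tr p (sp s2)) ->
    perp_star xi X1 (tr p (sp s2)).
Proof.
move=> fy fs2 sy ss2 hmk1 hk hp.
have YW0 := YW0_of hp.
have lY := sp_lsub y; have lW2 := sp_lsub s2.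
move=> [[q [hq [Z1 [Z2 [[az1 az2 z1q z2q] [_ _ [p12 _] aj1 aj2]]]]]] ne1 _].
rewrite hp in hq aj1 aj2 ne1; move: hq => /= hq; subst q.
rewrite ajoin_pt // in aj1; rewrite ajoin_pt // in aj2.
rewrite aj1 aj2 in p12.
have YW := proj1 (perp_tr _ _ lY lW2) p12.
have sy0 : (0 < size y)%N.
  rewrite lt0n; apply/negP => /eqP /size0nil ey; apply: ne1; rewrite ey.
  apply: seteqE => v; split => [/= ->|]; first by apply: tr_pt; exact: sp_lsub.
  by move=> /tr_mem /sp_nil /eqP; rewrite subr_eq0 => /eqP.
have y0n := fr_nth fy sy0.
have y0Y := sp_nth sy0.
move=> X1 /HkE [p1 [s1 [ss1 fs1 eX1]]] hsub /HkE [q' [t [st ft eM]]].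
have lW1 := sp_lsub s1; have lT := sp_lsub t.
have pX1 : X1 p by apply: hsub; exact: tr_pt.
rewrite eX1 in pX1; have {}eX1 : X1 = tr p (sp s1) by rewrite eX1; exact: rebase.
subst X1.
rewrite tr_cap in eM.
have pM : tr q' (sp t) p by rewrite -eM; apply: tr_pt; exact: lsubI.
have eT : sp s1 `&` sp s2 = sp t.
  apply: (tr_eq (p := p)); rewrite eM; exact: rebase.
have YW1 := tr_sub hsub.
have TW1 : sp t `<=` sp s1 by rewrite -eT => v [].
have TW2 : sp t `<=` sp s2 by rewrite -eT => v [].
have fyt : fr (y ++ t) by apply: fr_cat => // v hv /TW2; exact: YW0.
have yt_in : forall j, (j < size (y ++ t))%N -> sp s1 (y ++ t)`_j.
  move=> j; rewrite size_cat nth_cat; case: (ltnP j (size y)) => hj hj'.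
    by apply: YW1; apply: sp_nth.
  apply: TW1; apply: sp_nth; by rewrite ltn_subLR.
have [_ hKL] := KL fyt yt_in.
have W1yt : sp s1 `<=` sp (y ++ t).
  move=> v; apply: hKL; rewrite size_cat sy st ss1; lia.
pose W2' := [set v | sp s2 v /\ forall tau, sp t tau -> xi v tau = 0].
have lW2' : lsubspace W2'.
  split; first by split; [exact: sp0| move=> tau _; exact: xi0l].
  split.
  - move=> u v [hu ou] [hv ov]; split; first exact: spD.
    by move=> tau ht; rewrite xiDl ou // ov // addr0.
  - move=> a v [hv ov]; split; first exact: spZ.
    by move=> tau ht; rewrite xiZl ov // mulr0.
rewrite /perp_star /perp_o tr_cap eT.
split.
- exists p; split; first exact: tr_pt.
  exists (tr p (sp y)), (tr p W2'); split.
    by split; [exact: asub_tr|exact: asub_tr|exact: tr_pt|exact: tr_pt].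
  split.
  + split; last by exists p; split; exact: tr_pt.
    apply/perp_tr => // u w hu hw; apply: YW => //; exact: TW2.
  + split; last by exists p; split; exact: tr_pt.
    apply/perp_tr => // u w [_ hu] hw; exact: hu.
  + split; last by exists p; split; exact: tr_pt.
    apply/perp_tr => // u w hu [hw _]; exact: YW.
  + rewrite ajoin_tr //; congr tr; apply: seteqE => v; split.
    * move=> [a [b [ha [hb ->]]]]; apply: lsubD => //; [exact: TW1|exact: YW1].
    * move=> /W1yt /sp_cat [a [b [ha [hb ->]]]]; exists b, a; split => //; split => //.
      by rewrite addrC.
  + rewrite ajoin_tr //; congr tr; apply: seteqE => v; split.
    * move=> [a [b [ha [[hb _] ->]]]]; apply: lsubD => //; exact: TW2.
    * move=> hv; have [mu [hmu hort]] := gram ft v.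
      exists mu, (v - mu); split => //; split; last by rewrite addrC subrK.
      split; [apply: spB => //; exact: TW2| exact: hort].
- move=> e.
  have : tr p (sp s1) (p + y`_0) by apply/tr_memD; exact: YW1.
  rewrite -e => /tr_memD /TW2 h.
  by move/eqP: y0n; apply; exact: YW0.
- move=> /(tr_eq (p := p)) e.
  have W21 : sp s2 `<=` sp s1 by rewrite -e.
  have fys : fr (y ++ s2) by apply: fr_cat.
  have ys_in : forall j, (j < size (y ++ s2))%N -> sp s1 (y ++ s2)`_j.
    move=> j; rewrite size_cat nth_cat; case: (ltnP j (size y)) => hj1 hj2.
      by apply: YW1; apply: sp_nth.
    apply: W21; apply: sp_nth; by rewrite ltn_subLR.
  have [hle _] := KL fys ys_in.
  move: hle; rewrite size_cat sy ss2 ss1; lia.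
Qed.

Lemma dir2 p (y s2 : seq V) k1 k2 m : fr y -> fr s2 -> size y = (k1 - m)%N ->
  size s2 = k2 -> (m <= k1)%N -> (k1 <= k2)%N ->
  tr p (sp y) `&` tr p (sp s2) = [set p] ->
  (forall X1, Hk k1 X1 -> tr p (sp y) `<=` X1 -> Hk m (X1 `&` tr p (sp s2)) ->
    perp_star xi X1 (tr p (sp s2))) ->
  perp_star xi (tr p (sp y)) (tr p (sp s2)).
Proof.
move=> fy fs2 sy ss2 hmk1 hk hp H.
have YW0 := YW0_of hp.
have lY := sp_lsub y; have lW2 := sp_lsub s2.
have constr : forall i, (m + (i < size s2) <= size s2)%N ->
  let t := mkseq (fun j => s2`_(bump i j)) m in
  [/\ perp_star xi (tr p (sp (y ++ t))) (tr p (sp s2)),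
      tr p (sp (y ++ t)) `&` tr p (sp s2) = tr p (sp t),
      (forall v, sp t v -> exists e : nat -> F,
          v = \sum_(l < size s2) e l *: s2`_l /\ e i = 0)
    & (forall v, sp t v -> sp s2 v)].
  move=> i hi t.
  have [st ft rep TW2] := sel fs2 hi.
  have fyt : fr (y ++ t) by apply: fr_cat => // v hv /TW2; exact: YW0.
  have eI : tr p (sp (y ++ t)) `&` tr p (sp s2) = tr p (sp t).
    rewrite tr_cap; congr tr; apply: seteqE => v; split.
    - move=> [/sp_cat [a [b [ha [hb ->]]]] hv].
      have a0 : a = 0.
        apply: YW0 => //; have -> : a = (a + b) - b by rewrite addrK.
        apply: spB => //; exact: TW2.
      by rewrite a0 add0r.
    - move=> hv; split; last exact: TW2.
      apply/sp_cat; exists 0, v; rewrite add0r; split => //; exact: sp0.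
  split => //.
  apply: H.
  - apply/HkE; exists p, (y ++ t); split => //; rewrite size_cat sy st; lia.
  - move=> v /tr_mem hv; apply/tr_mem; apply/sp_cat; exists (v - p), 0.
    rewrite addr0; split => //; split => //; exact: sp0.
  - rewrite eI; apply/HkE; by exists p, t.
case: (ltnP m k1) => hmk.
-
  have ik : forall i, (i < k2)%N -> (m + (i < size s2) <= size s2)%N.
    move=> i hi; rewrite ss2 hi; lia.
  have R : forall i, (i < k2)%N -> forall u, sp y u -> exists mu,
      sp s2 mu /\ (exists e : nat -> F, mu = \sum_(l < size s2) e l *: s2`_l /\ e i = 0)
      /\ forall w, sp s2 w -> xi u w = xi mu w.
    move=> i hi u hu.
    have [hps eI rep TW2] := constr i (ik i hi).
    set t := mkseq _ m in hps eI rep TW2.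
    have lT := sp_lsub t; have lL1 := sp_lsub (y ++ t).
    move: hps; rewrite /perp_star /perp_o eI.
    move=> [[q [hq [Z1 [Z2 [[az1 az2 z1q z2q] [[pZ1M _] _ [pZ12 _] aj1 aj2]]]]]] _ _].
    have [U1 [lU1 eZ1]] := asub_pt az1 z1q.
    have [U2 [lU2 eZ2]] := asub_pt az2 z2q.
    have eq1 : tr p (sp t) = tr q (sp t) by exact: rebase.
    have hq2 : tr p (sp s2) q by move/tr_mem: hq => /TW2 h; apply/tr_mem.
    have eq2 : tr p (sp s2) = tr q (sp s2) by exact: rebase.
    have hq1 : tr p (sp (y ++ t)) q.
      move/tr_mem: hq => h; apply/tr_mem; apply/sp_cat; exists 0, (q - p).
      rewrite add0r; split => //; exact: sp0.
    have eq3 : tr p (sp (y ++ t)) = tr q (sp (y ++ t)) by exact: rebase.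
    rewrite eq1 eZ1 eZ2 in pZ1M pZ12 aj1 aj2.
    rewrite eq2 in aj2; rewrite eq3 in aj1.
    rewrite ajoin_tr // in aj1; rewrite ajoin_tr // in aj2.
    move/tr_eq: aj1 => aj1; move/tr_eq: aj2 => aj2.
    have o1 := proj1 (perp_tr _ _ lU1 lT) pZ1M.
    have o12 := proj1 (perp_tr _ _ lU1 lU2) pZ12.
    have oW : forall z w, U1 z -> sp s2 w -> xi z w = 0.
      move=> z w hz; rewrite -aj2 => -[a [b [ha [hb ->]]]].
      by rewrite xiDr o1 // o12 // addr0.
    have : sp (y ++ t) u.
      apply/sp_cat; exists u, 0; rewrite addr0; split => //; split => //; exact: sp0.
    rewrite -aj1 => -[mu [z [hmu [hz ->]]]].
    exists mu; split; first exact: TW2.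
    split; first exact: rep.
    by move=> w hw; rewrite xiDl (oW z w hz hw) addr0.
  have YW : forall u w, sp y u -> sp s2 w -> xi u w = 0.
    move=> u w hu hw.
    have k20 : (0 < k2)%N by lia.
    have [mu0 [hmu0 [_ hx0]]] := R 0%N k20 u hu.
    have [e0 he0] := hmu0.
    have mu00 : mu0 = 0.
      rewrite he0 big1 // => l _.
      have hl : (l < k2)%N by rewrite -ss2.
      have [mu [hmu [[e [he ei]] hx]]] := R l hl u hu.
      have emu : mu = mu0.
        apply/eqP; rewrite -subr_eq0; apply/eqP; apply: xi_aniso.
        have hd : sp s2 (mu - mu0) by exact: spB.
        by rewrite xiBl -hx // -hx0 // subrr.
      have := fr_coord fs2 (etrans (esym he0) (etrans (esym emu) he)) (ltn_ord l).
      by rewrite ei => ->; rewrite scale0r.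
    by rewrite hx0 // mu00 xi0l.
  have sy0 : (0 < size y)%N by rewrite sy; lia.
  have ss20 : (0 < size s2)%N by rewrite ss2; lia.
  rewrite /perp_star /perp_o hp; split.
  + exists p; split => //.
    exists (tr p (sp y)), (tr p (sp s2)); split.
      by split; [exact: asub_tr|exact: asub_tr|exact: tr_pt|exact: tr_pt].
    split.
    * split; first exact: perp_pt. by exists p; split => //; exact: tr_pt.
    * split; first exact: perp_pt. by exists p; split => //; exact: tr_pt.
    * split; first by apply/perp_tr.
      by exists p; split; exact: tr_pt.
    * apply: ajoin_pt; [exact: asub_tr|exact: tr_pt].
    * apply: ajoin_pt; [exact: asub_tr|exact: tr_pt].
  + move=> e.
    have : tr p (sp y) (p + y`_0) by apply/tr_memD; exact: sp_nth.
    rewrite -e /= => h; move/eqP: (fr_nth fy sy0); apply.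
    by apply: (addrI p); rewrite addr0.
  + move=> e.
    have : tr p (sp s2) (p + s2`_0) by apply/tr_memD; exact: sp_nth.
    rewrite -e /= => h; move/eqP: (fr_nth fs2 ss20); apply.
    by apply: (addrI p); rewrite addr0.
-
  exfalso.
  have hi : (m + (k2 < size s2) <= size s2)%N by rewrite ss2 ltnn addn0; lia.
  have [hps eI _ TW2] := constr k2 hi.
  set t := mkseq _ m in hps eI TW2.
  have y0 : y = [::] by apply: size0nil; rewrite sy; lia.
  move: hps => [_ ne _]; apply: ne; rewrite eI y0 cat0s //.
Qed.
End Xi.

Unset Implicit Arguments.
Set Strict Implicit.
Theorem lemma2p2 (F : fieldType) (V : lmodType F) (xi : V -> V -> F)
  (xi_sym : forall u v, xi u v = xi v u)
  (xi_linl : forall (a : F) (u v w : V), xi (a *: u + v) w = a * xi u w + xi v w)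
  (xi_nondeg : forall u, (forall v, xi u v = 0) -> u = 0)
  (xi_aniso : forall u, xi u u = 0 -> u = 0)
  (k1 k2 m : nat) (hmk1 : (m <= k1)%N) (hk : (k1 <= k2)%N)
  (hdim : dim_ge V (k1 + k2 - m))
  (Y1 X2 : set V) (hY1 : Hk (k1 - m) Y1) (hX2 : Hk k2 X2)
  (hpt : exists p, Y1 `&` X2 = [set p]) :
  perp_star xi Y1 X2 <->
  (forall X1 : set V, Hk k1 X1 -> Y1 `<=` X1 -> Hk m (X1 `&` X2) ->
     perp_star xi X1 X2).
Proof.
move: hY1 hX2 hpt => /HkE [py [y [sy fy eY]]] /HkE [px [s2 [ss2 fs2 eX]]] [p hp].
have [pY pX] : Y1 p /\ X2 p by have : (Y1 `&` X2) p by rewrite hp.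
rewrite eY in pY; rewrite eX in pX.
have eY' : Y1 = tr p (sp y) by rewrite eY; apply: rebase => //; exact: sp_lsub.
have eX' : X2 = tr p (sp s2) by rewrite eX; apply: rebase => //; exact: sp_lsub.
clear eY eX; subst Y1 X2.
split.
- exact: (dir1 xi_sym xi_linl xi_aniso fy fs2 sy ss2 hmk1 hk hp).
- exact: (dir2 xi_sym xi_linl xi_aniso fy fs2 sy ss2 hmk1 hk hp).
Qed.
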